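(* Let $\tau$ be a type and let $\mathcal F$ be a $2$-capturing construction scheme over $\omega_1$ of type $\tau$. For $\alpha\in\omega_1$ let $f_\alpha:\omega\to\omega$ be $f_\alpha(l)=|(\alpha)_l|$, and let $\mathcal B_{\mathcal F}=\{f_\alpha\}_{\alpha\in\omega_1}$, ordered by $f\le g$ iff $f(n)\le g(n)$ for all $n$. Then $(\mathcal B_{\mathcal F},\le)$ is a sixth Tukey type, i.e. it is a directed partial order of cardinality $\omega_1$ which is not Tukey equivalent to any of $1$, $\omega$, $\omega_1$, $\omega\times\omega_1$, $[\omega_1]^{<\omega}$ (with their natural orders).
   Context: For directed partial orders $D,E$, $E\le_T D$ if there is $\phi:D\to E$ mapping cofinal subsets of $D$ to cofinal subsets of $E$; $E\equiv_T D$ if $E\le_T D$ and $D\le_T E$. A type is a sequence $\tau=\{(m_k,n_{k+1},r_{k+1})\}_{k\in\omega}$ of natural numbers with $m_0=1$; $n_k\ge2$ for $k\ge1$; every $r\in\omega$ equals $r_k$ for infinitely many $k$; $m_k>r_{k+1}$; and $m_{k+1}=r_{k+1}+(m_k-r_{k+1})n_{k+1}$ for all $k$. For a set of ordinals $X$ and $\mathcal F\subseteq[X]^{<\omega}$, $\mathcal F_k$ is the set of elements of rank $k$ in $(\mathcal F,\subsetneq)$; $A\sqsubseteq B$ means $A\subseteq B$ and every element of $B$ below an element of $A$ is in $A$; $A<B$ means every element of $A$ is below every element of $B$. $\mathcal F$ is a construction scheme over $X$ of type $\tau$ if (1) every finite subset of $X$ lies in a member of $\mathcal F$; (2) $|F|=m_k$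 for $F\in\mathcal F_k$; (3) $E\cap F\sqsubseteq E,F$ for $E,F\in\mathcal F_k$; (4) each $F\in\mathcal F_{k+1}$ is the union of uniquely determined $F_0,\dots,F_{n_{k+1}-1}\in\mathcal F_k$ forming a $\Delta$-system with root $R(F)$, $|R(F)|=r_{k+1}$, $R(F)<F_0\setminus R(F)<\dots<F_{n_{k+1}-1}\setminus R(F)$. Let $\rho(\alpha,\beta)=\min\{k:\exists F\in\mathcal F_k\,(\{\alpha,\beta\}\subseteq F)\}$ and $(\alpha)_k=\{\xi\le\alpha:\rho(\xi,\alpha)\le k\}$. For $l\ge1$, $F\in\mathcal F_l$ and finite $\mathcal C\subseteq[\omega_1]^{<\omega}$: $F$ captures $\mathcal C$ if $|\mathcal C|\le n_l$ and $\mathcal C$ can be enumerated as $\{c_i\}_{i<|\mathcal C|}$ with $c_i\subseteq F_i$, $c_i\setminus R(F)\neq\emptyset$ and $\phi_i[c_0]=c_i$ where $\phi_i:F_0\to F_i$ is the increasing bijection. $\mathcal F$ is $2$-capturing if for every uncountable $S\subseteq[\omega_1]^{<\omega}$ and every $k\in\omega$ there are $\mathcal C\in[S]^2$, $l>k$ and $F\in\mathcal F_l$ capturing $\mathcal C$. *)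

(* Defs.v *)
(* omega_1 is modelled as an abstract strict well-order (W, lt)
   that is uncountable and all of whose proper initial segments are countable;
   this characterises omega_1 up to isomorphism. *)
From Stdlib Require Import List Arith.
Import ListNotations.

Section Defs.
Context {W : Type} (lt : W -> W -> Prop).

Definition is_omega1 : Prop :=
  well_founded lt /\
  (forall x y z, lt x y -> lt y z -> lt x z) /\
  (forall x y, lt x y \/ x = y \/ lt y x) /\
  ~ (exists f : W -> nat, forall x y, f x = f y -> x = y) /\
  (forall a, exists f : W -> nat,
      forall x y, lt x a -> lt y a -> f x = f y -> x = y).

Definition finite (A : W -> Prop) : Prop :=
  exists l : list W, forall x, A x <-> In x l.

Definition card_is (A : W -> Prop) (n : nat) : Prop :=
  exists l : list W, NoDup l /\ length l = n /\ forall x, A x <-> In x l.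

Definition subset (A B : W -> Prop) : Prop := forall x, A x -> B x.
Definition ssubset (A B : W -> Prop) : Prop := subset A B /\ ~ subset B A.

Definition initial_sub (A B : W -> Prop) : Prop :=
  subset A B /\ forall x y, B x -> A y -> lt x y -> A x.

Definition set_lt (A B : W -> Prop) : Prop :=
  forall x y, A x -> B y -> lt x y.

Definition setI (A B : W -> Prop) : W -> Prop := fun x => A x /\ B x.
Definition setD (A B : W -> Prop) : W -> Prop := fun x => A x /\ ~ B x.

(* Rank in the well-founded poset (Fam, ⊊):
   rank A = max { rank E + 1 : E ∈ Fam, E ⊊ A } (0 if there is no such E). *)
Inductive HasRank (Fam : (W -> Prop) -> Prop) : (W -> Prop) -> nat -> Prop :=
  | HasRank_intro : forall A k,
      Fam A ->
      (forall E, Fam E -> ssubset E A -> exists j, j < k /\ HasRank Fam E j) ->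
      (k = 0 \/ exists E, Fam E /\ ssubset E A /\ HasRank Fam E (pred k)) ->
      HasRank Fam A k.

(* A type tau = {(m_k, n_{k+1}, r_{k+1})}_k, given by sequences m, n, r
   (the values n 0, r 0 are irrelevant). *)
Definition is_type (m n r : nat -> nat) : Prop :=
  m 0 = 1 /\
  (forall k, 1 <= k -> 2 <= n k) /\
  (forall r0 N, exists k, N < k /\ r k = r0) /\
  (forall k, r (S k) < m k) /\
  (forall k, m (S k) = r (S k) + (m k - r (S k)) * n (S k)).

(* F ∈ F_{k+1} is the union of F_0,...,F_{n_{k+1}-1} ∈ F_k, a Delta-system
   with root R, |R| = r_{k+1}, R < F_0 \ R < ... < F_{n_{k+1}-1} \ R. *)
Definition IsDecomp (Fam : (W -> Prop) -> Prop) (n r : nat -> nat) (k : nat)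
    (F : W -> Prop) (Fs : nat -> W -> Prop) (R : W -> Prop) : Prop :=
  (forall i, i < n (S k) -> HasRank Fam (Fs i) k) /\
  (forall x, F x <-> exists i, i < n (S k) /\ Fs i x) /\
  (forall i j, i < j -> j < n (S k) -> forall x, (Fs i x /\ Fs j x) <-> R x) /\
  card_is R (r (S k)) /\
  set_lt R (setD (Fs 0) R) /\
  (forall i, S i < n (S k) -> set_lt (setD (Fs i) R) (setD (Fs (S i)) R)).

Definition construction_scheme (Fam : (W -> Prop) -> Prop) (m n r : nat -> nat)
  : Prop :=
  (forall F, Fam F -> finite F) /\
  (forall A, finite A -> exists F, Fam F /\ subset A F) /\
  (forall k F, HasRank Fam F k -> card_is F (m k)) /\
  (forall k E F, HasRank Fam E k -> HasRank Fam F k ->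
      initial_sub (setI E F) E /\ initial_sub (setI E F) F) /\
  (forall k F, HasRank Fam F (S k) ->
      exists Fs R, IsDecomp Fam n r k F Fs R /\
        forall Gs R', IsDecomp Fam n r k F Gs R' ->
          forall i, i < n (S k) -> forall x, Gs i x <-> Fs i x).

Definition incr_bij (A B : W -> Prop) (phi : W -> W) : Prop :=
  (forall x, A x -> B (phi x)) /\
  (forall x y, A x -> A y -> lt x y -> lt (phi x) (phi y)) /\
  (forall y, B y -> exists x, A x /\ phi x = y).

Definition captures (Fam : (W -> Prop) -> Prop) (n r : nat -> nat) (l : nat)
    (F : W -> Prop) (c : nat -> W -> Prop) (p : nat) : Prop :=
  exists l', l = S l' /\ exists Fs R, IsDecomp Fam n r l' F Fs R /\
    p <= n l /\
    forall i, i < p ->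
      subset (c i) (Fs i) /\
      (exists x, c i x /\ ~ R x) /\
      exists phi, incr_bij (Fs 0) (Fs i) phi /\
        forall y, c i y <-> exists x, c 0 x /\ phi x = y.

Definition set_eq (A B : W -> Prop) : Prop := forall x, A x <-> B x.

(* S ⊆ [W]^{<ω} uncountable (sets identified up to extensional equality) *)
Definition uncountable_family (S : (W -> Prop) -> Prop) : Prop :=
  ~ exists f : (W -> Prop) -> nat,
      forall A B, S A -> S B -> f A = f B -> set_eq A B.

Definition two_capturing (Fam : (W -> Prop) -> Prop) (n r : nat -> nat) : Prop :=
  forall S : (W -> Prop) -> Prop,
    (forall A, S A -> finite A) -> uncountable_family S ->
    forall k, exists a b l F,
      S a /\ S b /\ ~ set_eq a b /\ k < l /\ HasRank Fam F l /\
      captures Fam n r l F (fun i => if i =? 0 then a else b) 2.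

Definition rho_le (Fam : (W -> Prop) -> Prop) (xi alpha : W) (k : nat) : Prop :=
  exists j, j <= k /\ exists F, HasRank Fam F j /\ F xi /\ F alpha.

Definition alpha_k (Fam : (W -> Prop) -> Prop) (alpha : W) (k : nat) : W -> Prop :=
  fun xi => (lt xi alpha \/ xi = alpha) /\ rho_le Fam xi alpha k.

Definition B_F (Fam : (W -> Prop) -> Prop) : (nat -> nat) -> Prop :=
  fun g => exists alpha, forall l, card_is (alpha_k Fam alpha l) (g l).

End Defs.

Definition fun_le (f g : nat -> nat) : Prop := forall k, f k <= g k.

(* Directed orders are given as a carrier predicate D on a type and a relation. *)
Definition cofinal {T : Type} (D : T -> Prop) (le : T -> T -> Prop)
    (X : T -> Prop) : Prop :=
  (forall x, X x -> D x) /\ (forall d, D d -> exists x, X x /\ le d x).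

Definition tukey_le {U T : Type} (E : U -> Prop) (leE : U -> U -> Prop)
    (D : T -> Prop) (leD : T -> T -> Prop) : Prop :=
  exists phi : T -> U, (forall d, D d -> E (phi d)) /\
    forall X, cofinal D leD X -> cofinal E leE (fun u => exists x, X x /\ phi x = u).

Definition tukey_equiv {U T : Type} (E : U -> Prop) (leE : U -> U -> Prop)
    (D : T -> Prop) (leD : T -> T -> Prop) : Prop :=
  tukey_le E leE D leD /\ tukey_le D leD E leE.

Definition directed_po {T : Type} (D : T -> Prop) (le : T -> T -> Prop) : Prop :=
  (forall x, D x -> le x x) /\
  (forall x y z, D x -> D y -> D z -> le x y -> le y z -> le x z) /\
  (forall x y, D x -> D y -> le x y -> le y x -> x = y) /\
  (forall x y, D x -> D y -> exists z, D z /\ le x z /\ le y z).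

Definition one_le : unit -> unit -> Prop := fun _ _ => True.
Definition le_w1 {W : Type} (lt : W -> W -> Prop) (a b : W) : Prop := lt a b \/ a = b.
Definition le_prod {W : Type} (lt : W -> W -> Prop) (p q : nat * W) : Prop :=
  fst p <= fst q /\ le_w1 lt (snd p) (snd q).

(* Main.v *)
Require Import Defs.
From Stdlib Require Import List Arith Lia Cantor.
From Stdlib Require Import Classical ClassicalEpsilon FunctionalExtensionality.
Import ListNotations.

Section Gen.
Context {W : Type}.

Definition xm (P : Prop) : {P} + {~ P} := excluded_middle_informative P.

Lemma card_unique (A : W -> Prop) a b : card_is A a -> card_is A b -> a = b.
Proof.
  intros [l1 [N1 [L1 E1]]] [l2 [N2 [L2 E2]]].
  assert (length l1 <= length l2).
  { apply NoDup_incl_length; auto. intros x Hx. apply E2, E1, Hx. }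
  assert (length l2 <= length l1).
  { apply NoDup_incl_length; auto. intros x Hx. apply E1, E2, Hx. }
  lia.
Qed.

Lemma card_ext (A B : W -> Prop) a : (forall x, A x <-> B x) -> card_is A a -> card_is B a.
Proof.
  intros E [l [N [L H]]]. exists l. split; auto. split; auto.
  intro x. rewrite <- E. apply H.
Qed.

Lemma card_le (A B : W -> Prop) a b :
  card_is A a -> card_is B b -> (forall x, A x -> B x) -> a <= b.
Proof.
  intros [l1 [N1 [L1 E1]]] [l2 [N2 [L2 E2]]] S. subst.
  apply NoDup_incl_length; auto. intros x Hx. apply E2, S, E1, Hx.
Qed.

Lemma card_lt (A B : W -> Prop) a b x :
  card_is A a -> card_is B b -> (forall x, A x -> B x) -> B x -> ~ A x -> a < b.
Proof.
  intros [l1 [N1 [L1 E1]]] [l2 [N2 [L2 E2]]] Sb Bx nAx. subst.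
  enough (length (x :: l1) <= length l2) by (simpl in *; lia).
  apply NoDup_incl_length.
  - constructor; auto. intro H. apply nAx, E1, H.
  - intros y [<-|Hy]. apply E2, Bx. apply E2, Sb, E1, Hy.
Qed.

Lemma card_sub_exists (A B : W -> Prop) b :
  card_is B b -> (forall x, A x -> B x) -> exists a, card_is A a.
Proof.
  intros [l [N [L E]]] S.
  exists (length (filter (fun x => if xm (A x) then true else false) l)).
  eexists. split; [|split; [reflexivity|]].
  - apply NoDup_filter, N.
  - intro x. rewrite filter_In. destruct (xm (A x)); split; intuition.
    apply E, S, a. discriminate.
Qed.

Lemma finite_card (A : W -> Prop) : finite A -> exists a, card_is A a.
Proof.
  intros [l E].
  exists (length (nodup (fun x y => xm (x = y)) l)). eexists. split; [|split;[reflexivity|]].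
  - apply NoDup_nodup.
  - intro x. rewrite nodup_In. apply E.
Qed.

Lemma card_finite (A : W -> Prop) a : card_is A a -> finite A.
Proof. intros [l [_ [_ E]]]. exists l. exact E. Qed.

Lemma finite_sub (A B : W -> Prop) : finite B -> (forall x, A x -> B x) -> finite A.
Proof.
  intros HB S. destruct (finite_card _ HB) as [b Hb].
  destruct (card_sub_exists A B b Hb S) as [a Ha]. eapply card_finite; eauto.
Qed.

Lemma card_union (A B : W -> Prop) a b :
  card_is A a -> card_is B b -> (forall x, A x -> B x -> False) ->
  card_is (fun x => A x \/ B x) (a + b).
Proof.
  intros [l1 [N1 [L1 E1]]] [l2 [N2 [L2 E2]]] D. exists (l1 ++ l2).
  split; [|split].
  - apply NoDup_app; auto. intros x H1 H2. apply (D x); [apply E1|apply E2]; auto.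
  - rewrite length_app. lia.
  - intro x. rewrite in_app_iff, E1, E2. tauto.
Qed.

Lemma card_single (x : W) : card_is (fun y => y = x) 1.
Proof.
  exists [x]. split; [repeat constructor; simpl; tauto|split; [reflexivity|]].
  intro y; simpl; intuition.
Qed.

Lemma card_empty (A : W -> Prop) : (forall x, ~ A x) -> card_is A 0.
Proof.
  intro H. exists []. split; [constructor|split; [reflexivity|]].
  intro x; simpl; split; [apply H|tauto].
Qed.

Lemma card_pos (A : W -> Prop) a : card_is A a -> 0 < a -> exists x, A x.
Proof.
  intros [l [_ [L E]]] P. destruct l as [|x l]; simpl in L; [lia|].
  exists x. apply E. left; reflexivity.
Qed.

Definition cardf (A : W -> Prop) : nat :=
  match xm (exists k, card_is A k) with
  | left h => proj1_sig (constructive_indefinite_description _ h)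
  | right _ => 0
  end.

Lemma cardf_spec (A : W -> Prop) k : card_is A k -> cardf A = k.
Proof.
  intro H. unfold cardf. destruct (xm _) as [h|h].
  - destruct (constructive_indefinite_description _ h) as [k' Hk']; simpl.
    eapply card_unique; eauto.
  - exfalso; apply h; eauto.
Qed.

End Gen.

Lemma choice_fun {A B : Type} (R : A -> B -> Prop) :
  (forall a, exists b, R a b) -> exists f, forall a, R a (f a).
Proof.
  intro H. exists (fun a => proj1_sig (constructive_indefinite_description _ (H a))).
  intro a. exact (proj2_sig (constructive_indefinite_description _ (H a))).
Qed.


Lemma pair_inj a b c d : Cantor.to_nat (a, b) = Cantor.to_nat (c, d) -> a = c /\ b = d.
Proof.
  intro H. assert (E := f_equal Cantor.of_nat H). rewrite !Cantor.cancel_of_to in E.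
  inversion E; auto.
Qed.

Section Om.
Context {W : Type} (lt : W -> W -> Prop) (Hom : is_omega1 lt).

Definition countable (Q : W -> Prop) : Prop :=
  exists g : W -> nat, forall x y, Q x -> Q y -> g x = g y -> x = y.

Lemma lt_wf : well_founded lt. Proof. apply Hom. Qed.
Lemma lt_trans x y z : lt x y -> lt y z -> lt x z. Proof. apply Hom. Qed.
Lemma lt_total x y : lt x y \/ x = y \/ lt y x. Proof. apply Hom. Qed.
Lemma lt_irrefl x : ~ lt x x.
Proof.
  induction (lt_wf x) as [x _ IH]. intro H. exact (IH x H H).
Qed.
Lemma lt_asym x y : lt x y -> lt y x -> False.
Proof. intros. apply (lt_irrefl x). eapply lt_trans; eauto. Qed.

Lemma le_lt_trans x y z : le_w1 lt x y -> lt y z -> lt x z.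
Proof. intros [H| ->] H2; auto. eapply lt_trans; eauto. Qed.
Lemma lt_le_trans x y z : lt x y -> le_w1 lt y z -> lt x z.
Proof. intros H [H2| <-]; auto. eapply lt_trans; eauto. Qed.
Lemma le_trans' x y z : le_w1 lt x y -> le_w1 lt y z -> le_w1 lt x z.
Proof. intros [H| ->] H2; auto. left. eapply lt_le_trans; eauto. Qed.
Lemma le_antisym x y : le_w1 lt x y -> le_w1 lt y x -> x = y.
Proof. intros [H| ->] [H2| E]; auto. exfalso; eapply lt_asym; eauto. Qed.
Lemma not_lt_le x y : ~ lt x y -> le_w1 lt y x.
Proof. intro H. destruct (lt_total x y) as [h|[h|h]]; [tauto|right; auto|left; auto]. Qed.
Lemma le_not_lt x y : le_w1 lt x y -> ~ lt y x.
Proof. intros [H| ->] H2. eapply lt_asym; eauto. eapply lt_irrefl; eauto. Qed.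

Lemma not_countable_all : ~ countable (fun _ => True).
Proof.
  intros [g Hg]. destruct Hom as (_ & _ & _ & H & _). apply H. exists g. intros; auto.
Qed.

Lemma seg_countable w : countable (fun x => le_w1 lt x w).
Proof.
  destruct Hom as (_ & _ & _ & _ & H). destruct (H w) as [g Hg].
  exists (fun x => if xm (x = w) then 0 else S (g x)).
  intros x y Hx Hy. destruct (xm (x = w)), (xm (y = w)); try congruence.
  intro E; injection E; intro E'. destruct Hx as [Hx|Hx]; [|congruence].
  destruct Hy as [Hy|Hy]; [|congruence]. apply Hg; auto.
Qed.

Lemma countable_sub (Q Q' : W -> Prop) : countable Q -> (forall x, Q' x -> Q x) -> countable Q'.
Proof. intros [g Hg] S. exists g. intros; apply Hg; auto. Qed.

Lemma uncountable_unbounded (Q : W -> Prop) : ~ countable Q -> forall w, exists x, Q x /\ lt w x.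
Proof.
  intros H w. apply NNPP. intro H'. apply H. apply (countable_sub _ _ (seg_countable w)).
  intros x Qx. apply not_lt_le. intro l. apply H'. eauto.
Qed.

Lemma unbounded w : exists w', lt w w'.
Proof.
  destruct (uncountable_unbounded (fun _ => True) not_countable_all w) as [x [_ H]]. eauto.
Qed.

Lemma bound_countable (C : W -> Prop) (h : W -> W) :
  countable C -> exists d, forall x, C x -> le_w1 lt (h x) d.
Proof.
  intros [g Hg]. apply NNPP. intro H.
  assert (H1 : forall d, exists x, C x /\ lt d (h x)).
  { intro d. apply NNPP. intro H2. apply H. exists d. intros x Cx.
    apply not_lt_le. intro l. apply H2. eauto. }
  destruct (choice_fun _ H1) as [xs Hxs].
  destruct Hom as (_ & _ & _ & _ & Hseg).
  destruct (choice_fun _ Hseg) as [e He].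
  apply not_countable_all.
  exists (fun w => Cantor.to_nat (g (xs w), e (h (xs w)) w)).
  intros u v _ _ E. apply pair_inj in E. destruct E as [E1 E2].
  destruct (Hxs u) as [Cu Lu]. destruct (Hxs v) as [Cv Lv].
  assert (xs u = xs v) by (apply Hg; auto).
  rewrite H0 in E2, Lu. eapply He; eauto.
Qed.

Lemma countable_union (Q : W -> Prop) (P : nat -> W -> Prop) :
  (forall w, Q w -> exists k, P k w) ->
  (forall k, countable (fun w => Q w /\ P k w)) -> countable Q.
Proof.
  intros H1 H2.
  assert (H1' : forall w, exists k, Q w -> P k w).
  { intro w. destruct (xm (Q w)) as [q|q]. destruct (H1 w q) as [k Hk]; eauto.
    exists 0; tauto. }
  destruct (choice_fun _ H1') as [ks Hks].
  destruct (choice_fun _ H2) as [gs Hgs].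
  exists (fun w => Cantor.to_nat (ks w, gs (ks w) w)).
  intros u v Qu Qv E. apply pair_inj in E. destruct E as [E1 E2].
  rewrite E1 in E2. apply (Hgs (ks v)); auto. split; auto. rewrite <- E1. auto.
Qed.

End Om.





Lemma list_max {W} (lt : W -> W -> Prop) (Hom : is_omega1 lt) (l : list W) x0 :
  In x0 l -> exists g, In g l /\ forall y, In y l -> le_w1 lt y g.
Proof.
  revert x0; induction l as [|a l IH]; intros x0 H; [destruct H|].
  destruct l as [|b l'].
  - exists a. split; [left; auto|]. intros y [<-|[]]. right; auto.
  - destruct (IH b (or_introl eq_refl)) as (g & Hg & Hmax).
    destruct (lt_total lt Hom a g) as [h|[h|h]].
    + exists g. split; [right; auto|]. intros y [<-|Hy]; [left; auto|auto].
    + exists g. split; [right; auto|]. intros y [<-|Hy]; [right; auto|auto].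
    + exists a. split; [left; auto|]. intros y [<-|Hy]; [right; auto|].
      left. eapply le_lt_trans; eauto.
Qed.


Lemma conv {U T : Type} (E : U -> Prop) (leE : U -> U -> Prop) (D : T -> Prop)
  (leD : T -> T -> Prop) (phi : T -> U) :
  (forall X, cofinal D leD X -> cofinal E leE (fun u => exists x, X x /\ phi x = u)) ->
  forall e, E e -> exists d0, D d0 /\ forall d, D d -> leD d0 d -> leE e (phi d).
Proof.
  intros Hc e Ee. apply NNPP. intro Hn.
  set (X := fun d => D d /\ ~ leE e (phi d)).
  assert (HX : cofinal D leD X).
  { split. intros x [h _]; auto.
    intros d0 Dd0. apply NNPP. intro H. apply Hn. exists d0. split; auto.
    intros d Dd h. apply NNPP. intro h'. apply H. exists d. split; auto. split; auto. }
  destruct (Hc X HX) as [_ H]. destruct (H e Ee) as (u & (x & [_ Hx] & <-) & Hle). auto.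
Qed.

Section Sch.
Context {W : Type} (lt : W -> W -> Prop) (Fam : (W -> Prop) -> Prop) (m n r : nat -> nat).
Hypothesis Hom : is_omega1 lt.
Hypothesis Hty : is_type m n r.
Hypothesis Hcs : construction_scheme lt Fam m n r.
Hypothesis H2c : two_capturing lt Fam n r.

Notation Lk := (HasRank Fam).


Lemma cs_card F k : Lk F k -> card_is F (m k).
Proof. apply Hcs. Qed.
Lemma cs_coh E F k : Lk E k -> Lk F k ->
  initial_sub lt (setI E F) E /\ initial_sub lt (setI E F) F.
Proof. apply Hcs. Qed.
Lemma cs_dec F k : Lk F (S k) -> exists Fs R, IsDecomp lt Fam n r k F Fs R.
Proof. intro H. destruct Hcs as (_ & _ & _ & _ & H5). destruct (H5 k F H) as (Fs & R & D & _). eauto. Qed.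
Lemma n_ge2 k : 2 <= n (S k).
Proof. destruct Hty as (_ & H & _). apply H. lia. Qed.
Lemma r_lt k : r (S k) < m k.
Proof. destruct Hty as (_ & _ & _ & H & _). apply H. Qed.

Lemma dec_sub k F Fs R i x : IsDecomp lt Fam n r k F Fs R -> i < n (S k) -> Fs i x -> F x.
Proof. intros (_ & D & _) Hi Hx. apply D. eauto. Qed.
Lemma dec_rank k F Fs R i : IsDecomp lt Fam n r k F Fs R -> i < n (S k) -> Lk (Fs i) k.
Proof. intros (D & _) Hi. auto. Qed.

Lemma descent k : forall X x j, Lk X k -> X x -> j <= k ->
  exists H, Lk H j /\ H x /\ (forall z, H z -> X z).
Proof.
  induction k as [|k IH]; intros X x j HX Xx Hj.
  - assert (j = 0) by lia. subst. exists X; auto.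
  - destruct (Nat.eq_dec j (S k)) as [->|Hne]. exists X; auto.
    destruct (cs_dec _ _ HX) as (Fs & R & D).
    destruct D as (D1 & D2 & D3).
    destruct (proj1 (D2 x) Xx) as (i & Hi & Hix).
    destruct (IH (Fs i) x j (D1 i Hi) Hix ltac:(lia)) as (H & H1 & H2 & H3).
    exists H. split; [auto|split; [auto|]]. intros z Hz. apply D2. eauto.
Qed.

Definition trip (x y z : W) : W -> Prop := fun w => w = x \/ w = y \/ w = z.

Lemma exist2 x y k : exists l H, k < l /\ Lk H l /\ H x /\ H y.
Proof.
  set (S0 := fun s : W -> Prop => exists z, s = trip x y z).
  assert (Hfin : forall A, S0 A -> finite A).
  { intros A [z ->]. exists [x; y; z]. intro w. unfold trip; simpl. intuition. }
  assert (Hunc : uncountable_family S0).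
  { intros [f Hf]. apply (not_countable_all lt Hom).
    exists (fun z => if xm (z = x) then 0 else if xm (z = y) then 1 else S (S (f (trip x y z)))).
    intros u v _ _.
    destruct (xm (u = x)), (xm (v = x)), (xm (u = y)), (xm (v = y)); try congruence;
      try discriminate.
    intro E. injection E. intro E'.
    assert (HS := Hf _ _ (ex_intro _ u eq_refl) (ex_intro _ v eq_refl) E').
    destruct (proj1 (HS u) (or_intror (or_intror eq_refl))) as [h|[h|h]]; congruence. }
  destruct (H2c S0 Hfin Hunc k) as (a & b & l & F & Sa & Sb & Nab & Hkl & HF & Hc).
  destruct Hc as (l' & -> & Fs & R & D & Hp & Hi).
  destruct (Hi 0 ltac:(lia)) as (Hsub & _). simpl in Hsub.
  destruct Sa as [z ->].
  exists (S l'), F. split; [auto|split; [auto|split]].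
  - eapply (dec_sub l' F Fs R 0); eauto. pose proof (n_ge2 l'); lia. apply Hsub. left; auto.
  - eapply (dec_sub l' F Fs R 0); eauto. pose proof (n_ge2 l'); lia. apply Hsub. right; left; auto.
Qed.

Lemma exist1 x j : exists H, Lk H j /\ H x.
Proof.
  destruct (exist2 x x j) as (l & H & Hl & HH & Hx & _).
  destruct (descent l H x j HH Hx ltac:(lia)) as (H' & ? & ? & _). eauto.
Qed.

Lemma coh_down E H j a b : Lk E j -> Lk H j -> E a -> E b -> H b -> le_w1 lt a b -> H a.
Proof.
  intros HE HH Ea Eb Hb [ab| ->]; auto.
  destruct (cs_coh E H j HE HH) as [[_ I] _].
  assert (setI E H a). { apply (I a b); auto. split; auto. }
  apply H0.
Qed.

Lemma lift E j a b l : Lk E j -> E a -> E b -> j <= l ->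
  exists H, Lk H l /\ H a /\ H b.
Proof.
  intros HE Ea Eb Hjl.
  assert (forall a b, E a -> E b -> le_w1 lt a b -> exists H, Lk H l /\ H a /\ H b).
  { clear a b Ea Eb. intros a b Ea Eb ab.
    destruct (exist1 b l) as (H & HH & Hb).
    destruct (descent l H b j HH Hb Hjl) as (H' & HH' & Hb' & Sub).
    exists H. split; [auto|split; [|auto]]. apply Sub. apply (coh_down E H' j a b); auto.
  }
  destruct (lt_total lt Hom a b) as [h|[<-|h]].
  - apply H; auto. left; auto.
  - apply H; auto. right; auto.
  - destruct (H b a) as (H' & ? & ? & ?); auto. left; auto. eauto.
Qed.

Lemma alpha_char H j x : Lk H j -> H x ->
  forall z, alpha_k lt Fam x j z <-> H z /\ le_w1 lt z x.
Proof.
  intros HH Hx z. split.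
  - intros [zx (j' & Hj' & E & HE & Ez & Ex)]. split; [|exact zx].
    destruct (descent j H x j' HH Hx Hj') as (H' & HH' & Hx' & Sub).
    apply Sub. apply (coh_down E H' j' z x); auto.
  - intros [Hz zx]. split; auto. exists j. split; auto. exists H; auto.
Qed.



Definition below (X : W -> Prop) (x : W) : W -> Prop := fun z => X z /\ lt z x.
Definition fa (a : W) (l : nat) : nat := cardf (alpha_k lt Fam a l).

Lemma below_card X k x : Lk X k -> exists p, card_is (below X x) p.
Proof.
  intro HX. apply (card_sub_exists _ X (m k)). apply (cs_card X k HX).
  intros z [h _]; auto.
Qed.

Lemma fa_char H j x p : Lk H j -> H x -> card_is (below H x) p -> fa x j = S p.
Proof.
  intros HH Hx Hp. apply cardf_spec.
  replace (S p) with (p + 1) by lia.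
  eapply card_ext; [|apply card_union; [exact Hp|apply (card_single x)|]].
  - intro z. rewrite (alpha_char H j x HH Hx z).
    unfold below, le_w1. split.
    + intros [[Hz h]|h]; subst; auto.
    + intros [Hz [h|h]]; auto.
  - intros z [_ h] ->. eapply lt_irrefl; eauto.
Qed.

Lemma fa_spec a l : card_is (alpha_k lt Fam a l) (fa a l).
Proof.
  destruct (exist1 a l) as (H & HH & Ha).
  destruct (below_card H l a HH) as [p Hp].
  rewrite (fa_char H l a p HH Ha Hp).
  replace (S p) with (p + 1) by lia.
  eapply card_ext; [|apply card_union; [exact Hp|apply (card_single a)|]].
  - intro z. rewrite (alpha_char H l a HH Ha z).
    unfold below, le_w1. split.
    + intros [[Hz h]|h]; subst; auto.
    + intros [Hz [h|h]]; auto.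
  - intros z [_ h] ->. eapply lt_irrefl; eauto.
Qed.

Lemma fa_le_m a j : fa a j <= m j.
Proof.
  destruct (exist1 a j) as (H & HH & Ha).
  eapply card_le; [apply fa_spec|apply (cs_card H j HH)|].
  intros z Hz. apply (alpha_char H j a HH Ha z) in Hz. apply Hz.
Qed.

Lemma fa_top H j g : Lk H j -> H g -> (forall z, H z -> le_w1 lt z g) -> fa g j = m j.
Proof.
  intros HH Hg Hmax. eapply card_unique; [apply fa_spec|].
  eapply card_ext; [|apply (cs_card H j HH)].
  intro z. rewrite (alpha_char H j g HH Hg z). split; auto. tauto.
Qed.

Lemma lemC F K a b l : Lk F K -> F a -> F b -> le_w1 lt a b -> K <= l -> fa a l <= fa b l.
Proof.
  intros HF Fa Fb ab Kl.
  destruct (lift F K a b l HF Fa Fb Kl) as (H & HH & Ha & Hb).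
  eapply card_le; try apply fa_spec.
  intros z Hz. apply (alpha_char H l a HH Ha z) in Hz.
  apply (alpha_char H l b HH Hb z). split; [apply Hz|].
  eapply le_trans'; eauto. apply Hz.
Qed.

Lemma strict F c a b : Lk F c -> F a -> F b -> lt a b -> fa a c < fa b c.
Proof.
  intros HF Fa Fb ab.
  eapply (card_lt _ _ _ _ b); try apply fa_spec.
  - intros z Hz. apply (alpha_char F c a HF Fa z) in Hz.
    apply (alpha_char F c b HF Fb z). split; [apply Hz|].
    left. eapply le_lt_trans; eauto. apply Hz.
  - apply (alpha_char F c b HF Fb b). split; auto. right; auto.
  - intro Hz. apply (alpha_char F c a HF Fa b) in Hz.
    destruct Hz as [_ Hz]. eapply le_not_lt; eauto.
Qed.

Lemma fa_le_imp a b : fun_le (fa a) (fa b) -> le_w1 lt a b.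
Proof.
  intro H. apply (not_lt_le lt Hom). intro ba.
  destruct (exist2 b a 0) as (l & F & _ & HF & Fb & Fa).
  pose proof (strict F l b a HF Fb Fa ba). specialize (H l). lia.
Qed.

Lemma fa_inj a b : fa a = fa b -> a = b.
Proof.
  intro E. apply (le_antisym lt Hom); auto; apply fa_le_imp; intro k; rewrite E; auto.
Qed.

Lemma dir a b : exists g, fun_le (fa a) (fa g) /\ fun_le (fa b) (fa g) /\
  le_w1 lt a g /\ le_w1 lt b g.
Proof.
  destruct (exist2 a b 0) as (l & F & _ & HF & Fa & Fb).
  destruct (cs_card F l HF) as (L & _ & _ & EL).
  destruct (list_max lt Hom L a (proj1 (EL a) Fa)) as (g & Hg & Hmax).
  apply EL in Hg.
  assert (Hm : forall y, F y -> le_w1 lt y g) by (intros; apply Hmax, EL; auto).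
  assert (K : forall c, F c -> fun_le (fa c) (fa g)).
  { intros c Fc j. destruct (le_lt_dec l j) as [h|h].
    - eapply lemC; eauto.
    - destruct (descent l F g j HF Hg ltac:(lia)) as (H & HH & Hg' & Sub).
      rewrite (fa_top H j g HH Hg'). apply fa_le_m. intros; auto. }
  exists g. auto.
Qed.

Lemma BF_char g : B_F lt Fam g <-> exists a, g = fa a.
Proof.
  split.
  - intros [a Ha]. exists a. apply functional_extensionality. intro l.
    symmetry. apply cardf_spec. auto.
  - intros [a ->]. exists a. intro l. apply fa_spec.
Qed.


Definition gpos (r0 mk p : nat) : nat := if p <? r0 then p else r0 + (p - r0) mod (mk - r0).

Section Dec.
Variables (k : nat) (X : W -> Prop) (Fs : nat -> W -> Prop) (R : W -> Prop).
Hypothesis D : IsDecomp lt Fam n r k X Fs R.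

Let N := n (S k).
Let d := m k - r (S k).

Lemma dR_card : card_is R (r (S k)).
Proof. apply D. Qed.
Lemma dFs_rank i : i < N -> Lk (Fs i) k.
Proof. apply D. Qed.
Lemma dFs_card i : i < N -> card_is (Fs i) (m k).
Proof. intro h. apply cs_card. apply dFs_rank; auto. Qed.
Lemma dX i y : i < N -> Fs i y -> X y.
Proof. intros h Hy. apply D. eauto. Qed.
Lemma dX' y : X y -> exists i, i < N /\ Fs i y.
Proof. intro h. apply D. auto. Qed.
Lemma dN : 2 <= N.
Proof. apply n_ge2. Qed.
Lemma dR_sub i y : i < N -> R y -> Fs i y.
Proof.
  intros h Ry. pose proof dN. destruct D as (_ & _ & D3 & _).
  destruct i as [|i].
  - apply (D3 0 1 ltac:(lia) ltac:(lia) y). auto.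
  - apply (D3 0 (S i) ltac:(lia) h y). auto.
Qed.
Lemma dinter i j y : i < j -> j < N -> Fs i y -> Fs j y -> R y.
Proof. intros h1 h2 H1 H2. destruct D as (_ & _ & D3 & _). apply (D3 i j h1 h2 y). auto. Qed.
Lemma dd_card i : i < N -> card_is (setD (Fs i) R) d.
Proof.
  intro h. destruct (card_sub_exists (setD (Fs i) R) (Fs i) (m k) (dFs_card i h)) as [c Hc].
  { intros y [Hy _]; auto. }
  assert (E : card_is (Fs i) (r (S k) + c)).
  { eapply card_ext; [|apply card_union; [apply dR_card|exact Hc|]].
    - intro y. split.
      + intros [Ry|[Hy _]]; auto. apply (dR_sub i); auto.
      + intro Hy. destruct (classic (R y)); [left; auto|right; split; auto].
    - intros y Ry [_ nRy]; auto. }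
  pose proof (card_unique _ _ _ E (dFs_card i h)). unfold d.
  replace (m k - r (S k)) with c by lia. auto.
Qed.
Lemma d_pos : 0 < d.
Proof. pose proof (r_lt k). unfold d. lia. Qed.
Lemma dd_ne i : i < N -> exists y, Fs i y /\ ~ R y.
Proof.
  intro h. destruct (card_pos _ _ (dd_card i h) d_pos) as [y Hy]. exists y. apply Hy.
Qed.
Lemma dchain i j : i < j -> j < N -> set_lt lt (setD (Fs i) R) (setD (Fs j) R).
Proof.
  intros h1 h2. induction j as [|j IH]; [lia|].
  destruct D as (_ & _ & _ & _ & _ & D6).
  destruct (Nat.eq_dec i j) as [->|ne]. apply D6; auto.
  intros a b Ha Hb. destruct (dd_ne j ltac:(lia)) as [c Hc].
  apply (lt_trans lt Hom a c b). apply (IH ltac:(lia) ltac:(lia) a c Ha Hc). apply (D6 j h2 c b Hc Hb).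
Qed.
Lemma dRlt i : i < N -> set_lt lt R (setD (Fs i) R).
Proof.
  intros h. destruct D as (_ & _ & _ & _ & D5 & _).
  destruct i as [|i]; auto.
  intros a b Ha Hb. destruct (dd_ne 0 ltac:(lia)) as [c Hc].
  apply (lt_trans lt Hom a c b). apply (D5 a c Ha Hc). apply (dchain 0 (S i) ltac:(lia) h c b Hc Hb).
Qed.
Lemma dRinit i y z : i < N -> Fs i y -> R z -> lt y z -> R y.
Proof.
  intros h Hy Rz yz. apply NNPP. intro nRy.
  pose proof (dRlt i h z y Rz (conj Hy nRy)). eapply lt_asym; eauto.
Qed.
Lemma ddisj i j y : i < N -> j < N -> i <> j -> Fs i y -> Fs j y -> R y.
Proof.
  intros hi hj ne H1 H2. destruct (Nat.lt_gt_cases i j) as [[h|h] _]; auto.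
  eapply dinter; eauto. eapply dinter; eauto.
Qed.

Lemma d_union t : t <= N -> card_is (fun y => exists i, i < t /\ Fs i y /\ ~ R y) (t * d).
Proof.
  induction t as [|t IH]; intro h.
  - apply card_empty. intros y (i & hi & _). lia.
  - replace (S t * d) with (t * d + d) by lia.
    eapply card_ext; [|apply card_union; [apply IH; lia|apply (dd_card t); lia|]].
    + intro y. split.
      * intros [(i & hi & H)|[H1 H2]]; [exists i; split; [lia|auto]|exists t; auto].
      * intros (i & hi & H). destruct (Nat.eq_dec i t) as [->|ne]; [right; split; apply H|].
        left. exists i. split; [lia|auto].
    + intros y (i & hi & H1 & H2) [H3 _]. apply H2. apply (ddisj i t y); auto; lia.
Qed.

Lemma pos_lemma x p : X x -> card_is (below X x) p ->
  exists t, t < N /\ Fs t x /\ card_is (below (Fs t) x) (gpos (r (S k)) (m k) p).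
Proof.
  intros Xx Hp. pose proof dN as hN.
  destruct (classic (R x)) as [Rx|nRx].
  - exists 0. split; [lia|split; [apply dR_sub; auto; lia|]].
    assert (E : forall y, below X x y <-> below (Fs 0) x y).
    { intro y. split.
      - intros [Xy yx]. split; auto. destruct (dX' y Xy) as (i & hi & Hy).
        apply dR_sub; [lia|]. eapply dRinit; eauto.
      - intros [Hy yx]. split; auto. apply (dX 0); [lia|auto]. }
    pose proof (card_ext _ _ _ E Hp) as Hp'.
    assert (p < r (S k)).
    { eapply (card_lt _ R _ _ x Hp' dR_card); auto.
      - intros y [Hy yx]. eapply (dRinit 0); eauto. lia.
      - intros [_ h]. eapply lt_irrefl; eauto. }
    unfold gpos. destruct (p <? r (S k)) eqn:E2; auto.
    apply Nat.ltb_ge in E2. lia.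
  - destruct (dX' x Xx) as (t & ht & Hx). exists t. split; auto. split; auto.
    destruct (card_sub_exists (below (setD (Fs t) R) x) (Fs t) (m k) (dFs_card t ht))
      as [q Hq]. { intros y [[h _] _]; auto. }
    assert (Hqd : q < d).
    { eapply (card_lt _ _ _ _ x Hq (dd_card t ht)).
      - intros y [h _]; auto.
      - split; auto.
      - intros [_ h]. eapply lt_irrefl; eauto. }
    assert (E1 : card_is (below (Fs t) x) (r (S k) + q)).
    { eapply card_ext; [|apply card_union; [apply dR_card|exact Hq|]].
      - intro y. split.
        + intros [Ry|[[Hy _] yx]]; [|split; auto]. split; [apply dR_sub; auto|].
          apply (dRlt t ht); auto. split; auto.
        + intros [Hy yx]. destruct (classic (R y)); [left; auto|right; split; auto; split; auto].
      - intros y Ry [[_ h] _]; auto. }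
    assert (E2 : card_is (below X x) (r (S k) + t * d + q)).
    { eapply card_ext; [|apply card_union;
        [apply card_union; [apply dR_card|apply (d_union t); lia|]|exact Hq|]].
      - intro y. split.
        + intros [[Ry|(i & hi & Hy & nRy)]|[[Hy nRy] yx]].
          * split. apply (dX 0); [lia|]. apply dR_sub; auto; lia.
            apply (dRlt t ht); auto. split; auto.
          * split. apply (dX i); auto; lia. apply (dchain i t); auto; split; auto.
          * split; auto. apply (dX t); auto.
        + intros [Xy yx]. destruct (classic (R y)) as [Ry|nRy]; [left; left; auto|].
          destruct (dX' y Xy) as (i & hi & Hy).
          destruct (lt_eq_lt_dec i t) as [[h| ->]|h].
          * left; right. exists i. auto.
          * right. split; auto. split; auto.
          * exfalso. pose proof (dchain t i h hi x y (conj Hx nRx) (conj Hy nRy)).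
            eapply lt_asym; eauto.
      - intros y Ry (i & hi & Hy & nRy); auto.
      - intros y [Ry|(i & hi & Hy & nRy)] [[Hy' nRy'] _]; auto.
        apply nRy. apply (ddisj i t y); auto; lia. }

    pose proof (card_unique _ _ _ E2 Hp) as Ep.
    unfold gpos. destruct (p <? r (S k)) eqn:E3.
    + apply Nat.ltb_lt in E3. lia.
    + replace ((p - r (S k)) mod (m k - r (S k))) with q; auto.
      apply (Nat.mod_unique _ _ t); fold d; auto. lia.
Qed.

End Dec.

Lemma invQ k : forall X Y x y p, Lk X k -> Lk Y k -> X x -> Y y ->
  card_is (below X x) p -> card_is (below Y y) p -> forall j, j <= k -> fa x j = fa y j.
Proof.
  induction k as [|k IH]; intros X Y x y p HX HY Xx Yy Hpx Hpy j hj.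
  - assert (j = 0) by lia. subst.
    rewrite (fa_char X 0 x p HX Xx Hpx), (fa_char Y 0 y p HY Yy Hpy). auto.
  - destruct (Nat.eq_dec j (S k)) as [->|ne].
    + rewrite (fa_char X _ x p HX Xx Hpx), (fa_char Y _ y p HY Yy Hpy). auto.
    + destruct (cs_dec X k HX) as (Fs & R & D).
      destruct (cs_dec Y k HY) as (Gs & R' & D').
      destruct (pos_lemma k X Fs R D x p Xx Hpx) as (t & ht & Hxt & Ht).
      destruct (pos_lemma k Y Gs R' D' y p Yy Hpy) as (s & hs & Hys & Hs).
      apply (IH (Fs t) (Gs s) x y _ (dFs_rank k X Fs R D t ht) (dFs_rank k Y Gs R' D' s hs)
               Hxt Hys Ht Hs). lia.
Qed.

Lemma incr_inj A B phi x y : incr_bij lt A B phi -> A x -> A y -> phi x = phi y -> x = y.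
Proof.
  intros (_ & Hi & _) Ax Ay E. destruct (lt_total lt Hom x y) as [h|[h|h]]; auto.
  - pose proof (Hi x y Ax Ay h). rewrite E in H. exfalso; eapply lt_irrefl; eauto.
  - pose proof (Hi y x Ay Ax h). rewrite E in H. exfalso; eapply lt_irrefl; eauto.
Qed.

Lemma incr_refl A B phi x y : incr_bij lt A B phi -> A x -> A y -> lt (phi x) (phi y) -> lt x y.
Proof.
  intros Hb Ax Ay h. destruct (lt_total lt Hom x y) as [h'|[h'|h']]; auto.
  - subst. exfalso; eapply lt_irrefl; eauto.
  - destruct Hb as (_ & Hi & _). pose proof (Hi y x Ay Ax h'). exfalso; eapply lt_asym; eauto.
Qed.

Lemma card_image (P : W -> Prop) (f : W -> W) p : card_is P p ->
  (forall x y, P x -> P y -> f x = f y -> x = y) ->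
  card_is (fun z => exists w, P w /\ f w = z) p.
Proof.
  intros (l & N & L & E) Hi. exists (map f l). split; [|split].
  - assert (Hl : forall x, In x l -> P x) by (intros; apply E; auto).
    clear E L. induction l as [|a l IHl]; simpl; constructor.
    + intro H. apply in_map_iff in H. destruct H as (w & Hw & Iw).
      inversion N; subst. assert (w = a) by (apply Hi; auto; apply Hl; simpl; auto).
      subst; auto.
    + apply IHl. inversion N; auto. intros; apply Hl; simpl; auto.
  - rewrite length_map; auto.
  - intro z. rewrite in_map_iff. split.
    + intros (w & Pw & <-). exists w; split; auto. apply E; auto.
    + intros (w & <- & Iw). exists w; split; auto. apply E; auto.
Qed.

Lemma inv_bij k A B phi y : Lk A k -> Lk B k -> incr_bij lt A B phi -> A y ->
  forall j, j <= k -> fa y j = fa (phi y) j.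
Proof.
  intros HA HB Hb Ay.
  destruct (below_card A k y HA) as [p Hp].
  apply (invQ k A B y (phi y) p HA HB Ay (proj1 Hb y Ay) Hp).
  eapply card_ext; [|apply (card_image _ phi p Hp)].
  - intro z. split.
    + intros (w & [Aw wy] & <-). split. apply Hb; auto. apply Hb; auto.
    + intros [Bz zy]. destruct Hb as (H1 & H2 & H3). destruct (H3 z Bz) as (w & Aw & <-).
      exists w. split; auto. split; auto. eapply incr_refl; eauto. split; eauto.
  - intros a b [Aa _] [Ab _]. eapply incr_inj; eauto.
Qed.

Lemma cap_info l F a b : captures lt Fam n r l F (fun i => if i =? 0 then a else b) 2 ->
  exists l' Fs R phi, l = S l' /\ IsDecomp lt Fam n r l' F Fs R /\
    (forall x, a x -> Fs 0 x) /\ (forall x, b x -> Fs 1 x) /\ (exists x, a x /\ ~ R x) /\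
    incr_bij lt (Fs 0) (Fs 1) phi /\ (forall y, b y <-> exists x, a x /\ phi x = y).
Proof.
  intros (l' & -> & Fs & R & D & Hp & Hi).
  destruct (Hi 0 ltac:(lia)) as (S0 & (x & ax & nRx) & _).
  destruct (Hi 1 ltac:(lia)) as (S1 & _ & (phi & Hb & Him)).
  simpl in *. exists l', Fs, R, phi.
  split; [reflexivity|split; [exact D|split; [exact S0|split; [exact S1|split; [eauto|split; [exact Hb|exact Him]]]]]].
Qed.

Section Cap.
Variables (k : nat) (X : W -> Prop) (Fs : nat -> W -> Prop) (R : W -> Prop) (phi : W -> W).
Hypothesis D : IsDecomp lt Fam n r k X Fs R.
Hypothesis Hb : incr_bij lt (Fs 0) (Fs 1) phi.

Lemma fixr x : R x -> phi x = x.
Proof.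
  pose proof (dN k) as hN.
  induction (lt_wf lt Hom x) as [x _ IH]. intro Rx.
  assert (F0x : Fs 0 x) by (apply (dR_sub k X Fs R D 0); auto; lia).
  assert (F1x : Fs 1 x) by (apply (dR_sub k X Fs R D 1); auto; lia).
  destruct (lt_total lt Hom (phi x) x) as [h|[h|h]]; auto.
  - assert (F1p : Fs 1 (phi x)) by (apply Hb; auto).
    assert (Rp : R (phi x)) by (apply (dRinit k X Fs R D 1 (phi x) x); auto; lia).
    pose proof (IH (phi x) h Rp) as E.
    assert (F0p : Fs 0 (phi x)) by (apply (dR_sub k X Fs R D 0); auto; lia).
    pose proof (incr_inj _ _ _ _ _ Hb F0p F0x E) as E'.
    rewrite E' in h. exfalso; eapply lt_irrefl; eauto.
  - destruct Hb as (_ & _ & H3). destruct (H3 x F1x) as (y & F0y & Ey).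
    assert (yx : lt y x). { eapply (incr_refl _ _ phi); eauto. rewrite Ey. auto. }
    assert (Ry : R y) by (apply (dRinit k X Fs R D 0 y x); auto; lia).
    pose proof (IH y yx Ry) as E. rewrite E in Ey. subst.
    exfalso; eapply lt_irrefl; eauto.
Qed.

Lemma notR_phi x : Fs 0 x -> ~ R x -> ~ R (phi x) /\ lt x (phi x).
Proof.
  intros F0x nRx. pose proof (dN k) as hN.
  assert (nR : ~ R (phi x)).
  { intro Rp. pose proof (fixr _ Rp) as E.
    assert (F0p : Fs 0 (phi x)) by (apply (dR_sub k X Fs R D 0); auto; lia).
    pose proof (incr_inj _ _ _ _ _ Hb F0p F0x E) as E'. rewrite E' in Rp. auto. }
  split; auto. apply (dchain k X Fs R D 0 1); auto; split; auto. apply Hb; auto.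
Qed.

End Cap.

Lemma tri_map A B phi p1 p2 p3 q1 q2 q3 : incr_bij lt A B phi ->
  A p1 -> A p2 -> A p3 -> lt p1 p2 -> lt p2 p3 -> lt q1 q2 -> lt q2 q3 ->
  (forall y, trip q1 q2 q3 y <-> exists x, trip p1 p2 p3 x /\ phi x = y) ->
  phi p1 = q1 /\ phi p2 = q2 /\ phi p3 = q3.
Proof.
  intros Hb A1 A2 A3 l12 l23 m12 m23 Him.
  assert (l13 := lt_trans lt Hom _ _ _ l12 l23).
  assert (m13 := lt_trans lt Hom _ _ _ m12 m23).
  destruct Hb as (_ & Hi & _).
  assert (h12 := Hi _ _ A1 A2 l12). assert (h23 := Hi _ _ A2 A3 l23).
  assert (h13 := Hi _ _ A1 A3 l13).
  assert (b1 : trip q1 q2 q3 (phi p1)) by (apply Him; exists p1; split; [left|]; auto).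
  assert (b2 : trip q1 q2 q3 (phi p2)) by (apply Him; exists p2; split; [right; left|]; auto).
  assert (b3 : trip q1 q2 q3 (phi p3)) by (apply Him; exists p3; split; [right; right|]; auto).
  clear Him Hi. unfold trip in *.
  remember (phi p1) as u1 eqn:E1. remember (phi p2) as u2 eqn:E2. remember (phi p3) as u3 eqn:E3.
  clear E1 E2 E3.
  destruct b1 as [e1|[e1|e1]]; destruct b2 as [e2|[e2|e2]]; destruct b3 as [e3|[e3|e3]];
    subst u1 u2 u3; auto;
    exfalso;
    match goal with
    | H1 : lt ?a ?a |- _ => exact (lt_irrefl lt Hom a H1)
    | H1 : lt ?a ?b, H2 : lt ?b ?a |- _ => exact (lt_asym lt Hom a b H1 H2)
    end.
Qed.

Lemma fun_le_trans f g h : fun_le f g -> fun_le g h -> fun_le f h.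
Proof. intros H1 H2 k. specialize (H1 k); specialize (H2 k); lia. Qed.

Lemma trip_eq_min v w yv xv yw xw : lt v yv -> lt yv xv -> lt w yw -> lt yw xw ->
  set_eq (trip v yv xv) (trip w yw xw) -> v = w.
Proof.
  intros h1 h2 h3 h4 E.
  assert (A1 : trip w yw xw v) by (apply E; left; auto).
  assert (A2 : trip v yv xv w) by (apply E; left; auto).
  unfold trip in *.
  destruct A1 as [e|[e|e]]; auto; destruct A2 as [e'|[e'|e']]; auto; subst; exfalso.
  all: repeat match goal with
         | H1 : lt ?a ?b, H2 : lt ?b ?c |- _ =>
           lazymatch goal with
           | _ : lt a c |- _ => fail
           | _ => assert (lt a c) by exact (lt_trans lt Hom _ _ _ H1 H2)
           end
         end.
  all: match goal with H1 : lt ?a ?a |- _ => exact (lt_irrefl lt Hom a H1) end.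
Qed.

Lemma noconv (psi : nat * W -> nat -> nat) :
  (forall p, B_F lt Fam (psi p)) ->
  (forall a, exists n0 d0, forall k d, n0 <= k -> le_w1 lt d0 d -> fun_le (fa a) (psi (k, d))) ->
  False.
Proof.
  intros HB Hconv.
  assert (Hc' : forall a, exists nd : nat * W, forall k d, fst nd <= k -> le_w1 lt (snd nd) d ->
            fun_le (fa a) (psi (k, d))).
  { intro a. destruct (Hconv a) as (n0 & d0 & H). exists (n0, d0). auto. }
  destruct (choice_fun _ Hc') as [nd Hnd]. clear Hc'.
  assert (Hk0 : exists k0, ~ countable (fun w => True /\ fst (nd w) = k0)).
  { apply NNPP. intro H. apply (not_countable_all lt Hom).
    apply (countable_union (fun _ => True) (fun k w => fst (nd w) = k)); eauto.
    intro k. apply NNPP. intro H'. apply H. eauto. }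
  destruct Hk0 as [k0 Hk0].
  set (A := fun w => fst (nd w) = k0).
  assert (HA : ~ countable A).
  { intro H. apply Hk0. eapply countable_sub; eauto. intros x [_ h]; auto. }
  assert (sig : forall C, countable C -> (forall w, C w -> A w) ->
            exists g, forall w, C w -> fun_le (fa w) (fa g)).
  { intros C HC CA. destruct (bound_countable lt Hom C (fun w => snd (nd w)) HC) as [d Hd].
    destruct (proj1 (BF_char _) (HB (k0, d))) as [g Hg].
    exists g. intros w Cw. rewrite <- Hg. apply Hnd; auto. rewrite (CA w Cw). auto. }
  assert (Hspec : forall w, exists t : W * W * nat, A w ->
    lt w (fst (fst t)) /\ lt (fst (fst t)) (snd (fst t)) /\ A (snd (fst t)) /\
    (forall a, A a -> le_w1 lt a w -> fun_le (fa a) (fa (fst (fst t)))) /\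
    exists H, Lk H (snd t) /\ H (fst (fst t)) /\ H (snd (fst t))).
  { intro w. destruct (xm (A w)) as [Aw|nAw]; [|exists (w, w, 0); tauto].
    destruct (sig (fun a => A a /\ le_w1 lt a w)) as [g0 Hg0].
    { eapply countable_sub. apply (seg_countable lt Hom w). intros x [_ h]; auto. }
    { intros x [h _]; auto. }
    destruct (unbounded lt Hom w) as [w' Hw'].
    destruct (dir g0 w') as (y & Hy1 & _ & _ & Hy2).
    destruct (uncountable_unbounded lt Hom A HA y) as (x & Ax & yx).
    destruct (exist2 y x 0) as (c & H & _ & HH & Hy & Hx).
    exists (y, x, c). intros _. simpl. split; [eapply lt_le_trans; eauto|].
    split; auto. split; auto. split; [|eauto].
    intros a Aa aw. eapply fun_le_trans; [apply Hg0; split; auto|auto]. }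
  destruct (choice_fun _ Hspec) as [T HT]. clear Hspec.
  set (Y := fun w => fst (fst (T w))). set (Xf := fun w => snd (fst (T w))).
  set (Cf := fun w => snd (T w)).
  assert (Hc0 : exists c0, ~ countable (fun w => A w /\ Cf w = c0)).
  { apply NNPP. intro H. apply HA.
    apply (countable_union A (fun c w => Cf w = c)); eauto.
    intro c. apply NNPP. intro H'. apply H. eauto. }
  destruct Hc0 as [c0 HU].
  set (U := fun w => A w /\ Cf w = c0).
  set (S0 := fun s => exists w, U w /\ s = trip w (Y w) (Xf w)).
  assert (Hfin : forall s, S0 s -> finite s).
  { intros s (w & _ & ->). exists [w; Y w; Xf w]. intro z. unfold trip; simpl. intuition. }
  assert (Hunc : uncountable_family S0).
  { intros [f Hf]. apply HU. exists (fun w => f (trip w (Y w) (Xf w))).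
    intros v w Uv Uw E.
    pose proof (Hf _ _ (ex_intro _ v (conj Uv eq_refl)) (ex_intro _ w (conj Uw eq_refl)) E) as HS.
    destruct (HT v (proj1 Uv)) as (a1 & a2 & _). destruct (HT w (proj1 Uw)) as (b1 & b2 & _).
    eapply trip_eq_min; eauto. }
  destruct (H2c S0 Hfin Hunc c0) as (a & b & l & F & Sa & Sb & Nab & Hcl & HF & Hcap).
  destruct (cap_info l F a b Hcap) as (l' & Fs & R & phi & -> & D & Sa0 & Sb1 & (x0 & ax0 & nRx0) & Hbij & Him).
  destruct Sa as (v & Uv & ->). destruct Sb as (w & Uw & ->).
  destruct (HT v (proj1 Uv)) as (v1 & v2 & Av & Hv & HHv).
  destruct (HT w (proj1 Uw)) as (w1 & w2 & Aw & Hw & _).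
  fold (Y v) (Xf v) (Y w) (Xf w) in *.
  assert (Fv : Fs 0 v) by (apply Sa0; left; auto).
  assert (Fyv : Fs 0 (Y v)) by (apply Sa0; right; left; auto).
  assert (Fxv : Fs 0 (Xf v)) by (apply Sa0; right; right; auto).
  destruct (tri_map _ _ _ _ _ _ _ _ _ Hbij Fv Fyv Fxv v1 v2 w1 w2 Him) as (Ev & Eyv & Exv).
  assert (nRxv : ~ R (Xf v)).
  { intro Rx. apply nRx0. destruct ax0 as [e|[e|e]]; subst; auto.
    - apply (dRinit l' F Fs R D 0 v (Xf v)); auto. pose proof (n_ge2 l'); lia.
      eapply lt_trans; eauto.
    - apply (dRinit l' F Fs R D 0 (Y v) (Xf v)); auto. pose proof (n_ge2 l'); lia. }
  assert (nRv : ~ R v).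
  { intro Rv. pose proof (fixr l' F Fs R phi D Hbij v Rv) as E. rewrite Ev in E.
    apply Nab. intro z. rewrite E. split; auto. }
  destruct (notR_phi l' F Fs R phi D Hbij v Fv nRv) as [nRw _]. rewrite Ev in nRw.
  assert (xw : lt (Xf v) w).
  { apply (dchain l' F Fs R D 0 1); auto. pose proof (n_ge2 l'); lia.
    split; auto. split; auto. apply Sb1. left; auto. }
  assert (Hle : fun_le (fa (Xf v)) (fa (Y w))).
  { apply Hw; auto. left; auto. }
  assert (Hinv : fa (Y v) c0 = fa (Y w) c0).
  { rewrite <- Eyv. apply (inv_bij l' (Fs 0) (Fs 1) phi (Y v)); auto.
    - apply (dFs_rank l' F Fs R D 0). pose proof (n_ge2 l'); lia.
    - apply (dFs_rank l' F Fs R D 1). pose proof (n_ge2 l'); lia.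
    - lia. }
  destruct Uv as [_ Cv].
  assert (Hst : fa (Y v) c0 < fa (Xf v) c0).
  { destruct HHv as (H & HH & Hy & Hx). unfold Cf in Cv. rewrite Cv in HH.
    apply (strict H c0 (Y v) (Xf v)); auto. }
  specialize (Hle c0). lia.
Qed.

Lemma key1 (A : W -> Prop) : ~ countable A ->
  exists g, A g /\ ~ finite (fun a => A a /\ fun_le (fa a) (fa g)).
Proof.
  intro HA. apply NNPP. intro Hn.
  set (P := fun g => fun a => A a /\ fun_le (fa a) (fa g)).
  assert (Hfin : forall g, A g -> finite (P g)).
  { intros g Ag. apply NNPP. intro h. apply Hn. exists g. auto. }
  set (S0 := fun s => exists g, A g /\ s = P g).
  assert (Hf0 : forall s, S0 s -> finite s) by (intros s (g & Ag & ->); auto).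
  assert (Hrefl : forall g, A g -> P g g) by (intros g Ag; split; [auto|intro k; auto]).
  assert (Hmax : forall g a, P g a -> le_w1 lt a g) by (intros g a [_ h]; apply fa_le_imp; auto).
  assert (Hunc : uncountable_family S0).
  { intros [f Hf]. apply HA. exists (fun g => f (P g)). intros u v Au Av E.
    pose proof (Hf _ _ (ex_intro _ u (conj Au eq_refl)) (ex_intro _ v (conj Av eq_refl)) E) as HS.
    apply (le_antisym lt Hom); apply Hmax with (g := _).
    - apply HS. apply Hrefl; auto.
    - apply HS. apply Hrefl; auto. }
  destruct (H2c S0 Hf0 Hunc 0) as (a & b & l & F & Sa & Sb & Nab & _ & HF & Hcap).
  destruct (cap_info l F a b Hcap) as (l' & Fs & R & phi & -> & D & Sa0 & Sb1 & (x0 & ax0 & nRx0) & Hbij & Him).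
  destruct Sa as (g & Ag & ->). destruct Sb as (h & Ah & ->).
  pose proof (n_ge2 l') as hN.
  assert (Fg : Fs 0 g) by (apply Sa0; apply Hrefl; auto).
  assert (Eh : phi g = h).
  { apply (le_antisym lt Hom).
    - apply (Hmax h). apply Him. exists g. split; auto.
    - destruct (proj1 (Him h) (Hrefl h Ah)) as (x & Px & <-).
      destruct (Hmax g x Px) as [h1| ->]; [left|right; auto].
      destruct Hbij as (_ & Hi & _). apply Hi; auto. }
  assert (nRg : ~ R g).
  { intro Rg. apply nRx0. destruct (Hmax g x0 ax0) as [h1| ->]; auto.
    apply (dRinit l' F Fs R D 0 x0 g); auto. lia. }
  destruct (notR_phi l' F Fs R phi D Hbij g Fg nRg) as [nRh gh]. rewrite Eh in nRh, gh.
  assert (Fh : Fs 1 h) by (rewrite <- Eh; apply Hbij; auto).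
  assert (Hle : fun_le (fa g) (fa h)).
  { intro j. destruct (le_lt_dec j l') as [hj|hj].
    - rewrite <- Eh. rewrite (inv_bij l' (Fs 0) (Fs 1) phi g); auto.
      apply (dFs_rank l' F Fs R D 0); lia. apply (dFs_rank l' F Fs R D 1); lia.
    - apply (lemC F (S l') g h j HF); auto.
      apply (dX l' F Fs R D 0); auto; lia. apply (dX l' F Fs R D 1); auto; lia.
      left; auto. }
  assert (Phg : P h g) by (split; auto).
  apply nRg. apply (dinter l' F Fs R D 0 1); auto.
Qed.

Lemma main_sec :
  let B := B_F lt Fam in
  directed_po B fun_le /\
  (exists phi : W -> (nat -> nat),
     (forall a, B (phi a)) /\ (forall a b, phi a = phi b -> a = b) /\
     (forall g, B g -> exists a, phi a = g)) /\
  ~ tukey_equiv B fun_le (fun _ : unit => True) one_le /\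
  ~ tukey_equiv B fun_le (fun _ : nat => True) le /\
  ~ tukey_equiv B fun_le (fun _ : W => True) (le_w1 lt) /\
  ~ tukey_equiv B fun_le (fun _ : nat * W => True) (le_prod lt) /\
  ~ tukey_equiv B fun_le (finite (W:=W)) (subset (W:=W)).
Proof.
  intro B.
  assert (HBfa : forall a, B (fa a)) by (intro a; apply BF_char; eauto).
  split; [|split; [|split; [|split; [|split; [|split]]]]].
  - split; [|split; [|split]].
    + intros x _ k; auto.
    + intros x y z _ _ _ H1 H2. eapply fun_le_trans; eauto.
    + intros x y _ _ H1 H2. apply functional_extensionality. intro k.
      specialize (H1 k); specialize (H2 k). lia.
    + intros x y Bx By. apply BF_char in Bx, By. destruct Bx as [a ->], By as [b ->].
      destruct (dir a b) as (g & H1 & H2 & _). exists (fa g). auto.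
  - exists fa. split; [auto|split; [apply fa_inj|]].
    intros g Bg. apply BF_char in Bg. destruct Bg as [a ->]. eauto.
  - intros [[phi [Hmap Hcof]] _].
    apply (noconv (fun _ => phi tt)). intros; apply Hmap; auto.
    intro a. destruct (conv _ _ _ _ phi Hcof (fa a) (HBfa a)) as (d0 & _ & Hd).
    exists 0, a. intros k d _ _. destruct d0. apply Hd; auto. exact I.
  - intros [[phi [Hmap Hcof]] _].
    apply (noconv (fun p => phi (fst p))). intros; apply Hmap; auto.
    intro a. destruct (conv _ _ _ _ phi Hcof (fa a) (HBfa a)) as (d0 & _ & Hd).
    exists d0, a. intros k d h _. apply Hd; auto.
  - intros [[phi [Hmap Hcof]] _].
    apply (noconv (fun p => phi (snd p))). intros; apply Hmap; auto.
    intro a. destruct (conv _ _ _ _ phi Hcof (fa a) (HBfa a)) as (d0 & _ & Hd).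
    exists 0, d0. intros k d _ h. apply Hd; auto.
  - intros [[phi [Hmap Hcof]] _].
    apply (noconv phi). intros; apply Hmap; auto.
    intro a. destruct (conv _ _ _ _ phi Hcof (fa a) (HBfa a)) as ([n0 d0] & _ & Hd).
    exists n0, d0. intros k d h1 h2. apply Hd; auto. split; auto.
  - intros [_ [phi [Hmap Hcof]]].
    assert (Hx : forall x, exists a, forall d, B d -> fun_le (fa a) d -> phi d x).
    { intro x. assert (Fx : finite (fun y => y = x)).
      { exists [x]. intro y; simpl; intuition. }
      destruct (conv _ _ _ _ phi Hcof _ Fx) as (d0 & Bd0 & Hd).
      apply BF_char in Bd0. destruct Bd0 as [a ->]. exists a.
      intros d Bd h. apply (Hd d Bd h x). auto. }
    destruct (choice_fun _ Hx) as [ax Hax]. clear Hx.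
    assert (HL : forall a, exists L, forall y, phi (fa a) y <-> In y L).
    { intro a. apply Hmap. auto. }
    destruct (choice_fun _ HL) as [Lf HLf]. clear HL.
    set (A := fun a => exists x, ax x = a).
    assert (HA : ~ countable A).
    { intros [g Hg].
      assert (Hi : forall w, exists i, nth_error (Lf (ax w)) i = Some w).
      { intro w. apply In_nth_error. apply HLf. apply Hax; auto. intro k; auto. }
      destruct (choice_fun _ Hi) as [iw Hiw].
      apply (not_countable_all lt Hom).
      exists (fun w => Cantor.to_nat (g (ax w), iw w)).
      intros u v _ _ E. apply pair_inj in E. destruct E as [E1 E2].
      assert (ax u = ax v) as E3.
      { apply Hg; auto. exists u; auto. exists v; auto. }
      pose proof (Hiw u) as Hu. pose proof (Hiw v) as Hv.
      rewrite E3, E2 in Hu. rewrite Hu in Hv. injection Hv; auto. }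
    destruct (key1 A HA) as (g & Ag & Hnf).
    apply Hnf. apply (finite_sub _ (fun a => In a (map ax (Lf g)))).
    { exists (map ax (Lf g)). intro; tauto. }
    intros a [[x <-] Hle]. apply in_map. apply HLf. apply Hax; auto.
Qed.

End Sch.

Theorem mainTheorem11 (W : Type) (lt : W -> W -> Prop)
  (m n r : nat -> nat) (Fam : (W -> Prop) -> Prop) :
  is_omega1 lt ->
  is_type m n r ->
  construction_scheme lt Fam m n r ->
  two_capturing lt Fam n r ->
  let B := B_F lt Fam in
  directed_po B fun_le /\
  (exists phi : W -> (nat -> nat),
     (forall a, B (phi a)) /\ (forall a b, phi a = phi b -> a = b) /\
     (forall g, B g -> exists a, phi a = g)) /\
  ~ tukey_equiv B fun_le (fun _ : unit => True) one_le /\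
  ~ tukey_equiv B fun_le (fun _ : nat => True) le /\
  ~ tukey_equiv B fun_le (fun _ : W => True) (le_w1 lt) /\
  ~ tukey_equiv B fun_le (fun _ : nat * W => True) (le_prod lt) /\
  ~ tukey_equiv B fun_le (finite (W:=W)) (subset (W:=W)).
Proof.
  intros Hom Hty Hcs H2c.
  eapply main_sec; eassumption.
Qed.
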